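(* Let $(N,M_0)$ be a three-level PT-net system with transitions $T$ partitioned into low-level $L$, downgrading $D$ and high-level $H$. Then $(N,M_0)$ has the property INI if and only if $(N\setminus D,M)\sim(N\setminus(H\cup D),M)$ for $M=M_0$ and for every marking $M$ such that $M_0[\upsilon d\rangle M$ in $N$ for some $\upsilon\in T^*$ and $d\in D$.
   Context: A PT-net is $N=(P,T,F)$ with $P,T$ finite disjoint and $F:(P\times T)\cup(T\times P)\to\mathbb{N}$; markings $M:P\to\mathbb{N}$; $t$ enabled at $M$ ($M[t\rangle$) iff $M(p)\ge F(p,t)$ for all $p$, firing gives $M'(p)=M(p)+F(t,p)-F(p,t)$; extended to sequences. $N\setminus T'$ deletes the transitions of $T'$. For net systems whose transitions are split into observable low-level $L$ and unobservable high-level ones, the language is the set of projections onto $L^*$ of all firing sequences from the initial marking; $\sim$ (language equivalence) means equal languages. In $(N\setminus D,M)$ the transitions of $L$ are low-level and those of $H$ are high-level; in $(N\setminus(H\cup D),M)$ all transitions are low-level. For two-level systems with disjoint place sets, $\mathcal{N}_1|\mathcal{N}_2$ has the union of places, the union of transitions (shared transitions synchronize, arcs inherited from each component on its own places), and union of initial markings; a high-level net system has only high-level transitions. A two-level system $\mathcal{N}$ (low $L$, high $H$) has NDC iff for every high-level net system $\mathcal{N}'$ (places disjoint from those of $\mathcal{N}$) with transition set $H'$ disjoint from $L$, $\mathcal{N}\setminus H\sim(\mathcal{N}|\mathcal{N}')\setminus(H\setminus H')$. The three-level system $(N,M_0)$ has INI iff the two-level system $(N\setminus D,M)$ has NDC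 for $M=M_0$ and for every marking $M$ with $M_0[\upsilon d\rangle M$ in $N$ for some $\upsilon\in T^*$, $d\in D$. *)

(* Defs.v *)
From mathcomp Require Import all_boot.
Set Implicit Arguments. Unset Strict Implicit. Unset Printing Implicit Defensive.

(* A PT-net N = (P, T, F): finite place type P, finite transition set T
   (a subset of the universe X of transition names), arc weights
   F(p,t) = pre p t and F(t,p) = post p t. *)
Record net (X : finType) := Net {
  place : finType;
  trans : {set X};
  pre : place -> X -> nat;
  post : place -> X -> nat }.
Arguments Net {X} place trans pre post.
Arguments place {X} _.
Arguments trans {X} _.
Arguments pre {X} _ _ _.
Arguments post {X} _ _ _.

Definition marking (X : finType) (N : net X) := place N -> nat.

Section Nets.
Variable X : finType.

Definition enabled (N : net X) (M : marking N) (t : X) : Prop :=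
  t \in trans N /\ forall p, pre N p t <= M p.

Definition fire (N : net X) (M : marking N) (t : X) : marking N :=
  fun p => M p + post N p t - pre N p t.

Inductive fires (N : net X) : marking N -> seq X -> marking N -> Prop :=
  | fires_nil M : fires M [::] M
  | fires_cons M t s M' : enabled M t -> fires (fire M t) s M' ->
      fires M (t :: s) M'.

Definition restrict (N : net X) (T' : {set X}) : net X :=
  Net (place N) (trans N :\: T') (pre N) (post N).

Definition lang (N : net X) (M : marking N) (Obs : {set X}) (w : seq X) : Prop :=
  exists s M', fires M s M' /\ w = [seq t <- s | t \in Obs].

Definition lang_equiv (N1 : net X) (M1 : marking N1) (O1 : {set X})
  (N2 : net X) (M2 : marking N2) (O2 : {set X}) : Prop :=
  forall w, lang M1 O1 w <-> lang M2 O2 w.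

(* Parallel composition N1 | N2 (disjoint places via a sum type; shared
   transitions synchronize; arcs inherited from each component on its own
   places). *)
Definition comp (N1 N2 : net X) : net X :=
  Net (place N1 + place N2)%type (trans N1 :|: trans N2)
    (fun q t => match q with
                | inl p => if t \in trans N1 then pre N1 p t else 0
                | inr p => if t \in trans N2 then pre N2 p t else 0 end)
    (fun q t => match q with
                | inl p => if t \in trans N1 then post N1 p t else 0
                | inr p => if t \in trans N2 then post N2 p t else 0 end).

Definition comp_marking (N1 N2 : net X) (M1 : marking N1) (M2 : marking N2)
  : marking (comp N1 N2) :=
  fun q => match q with inl p => M1 p | inr p => M2 p end.

(* NDC for the two-level system (N, M) with low-level transitions L and
   high-level transitions H:  for every high-level net system (N', M')
   (all transitions high, H' = trans N', H' disjoint from L),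
   N \ H  ~  (N | N') \ (H \ H'). *)
Definition NDC (N : net X) (M : marking N) (L H : {set X}) : Prop :=
  forall (N' : net X) (M' : marking N'),
    [disjoint trans N' & L] ->
    lang_equiv (M : marking (restrict N H)) L
      (comp_marking M M' : marking (restrict (comp N N') (H :\: trans N'))) L.

Definition INI (N : net X) (M0 : marking N) (L D H : {set X}) : Prop :=
  NDC (M0 : marking (restrict N D)) L H /\
  forall (M : marking N) (u : seq X) (d : X), d \in D ->
    fires M0 (rcons u d) M -> NDC (M : marking (restrict N D)) L H.

End Nets.

(* Main.v *)
Require Import Defs.
From mathcomp Require Import all_boot.
From Stdlib Require Import FunctionalExtensionality.
Set Implicit Arguments. Unset Strict Implicit. Unset Printing Implicit Defensive.

Section Aux.
Variable X : finType.

Lemma fires_restrict (N : net X) (K : {set X}) (M : marking N) s M' :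
  fires (M : marking (restrict N K)) s M' ->
  fires (M : marking N) s M' /\ forall t, t \in s -> t \notin K.
Proof.
elim=> {M s M'} [M|M t s M' [ht hp] _ [IH1 IH2]].
  by split; [constructor|].
rewrite /restrict /= in_setD in ht; case/andP: ht => htK htN.
split; first by constructor => //; split.
by move=> t'; rewrite inE => /orP [/eqP ->|]; [|apply: IH2].
Qed.

Lemma fires_rr (N : net X) (K1 K2 : {set X}) (M : marking N) s M' :
  fires (M : marking (restrict (restrict N K1) K2)) s M' <->
  fires (M : marking (restrict N (K2 :|: K1))) s M'.
Proof.
split.
- elim=> {M s M'} [M|M t s M' [ht hp] _ IH]; first by constructor.
  constructor => //; split => //.
  by move: ht; rewrite /restrict /= !inE negb_or; case/and3P => -> -> ->.
- elim=> {M s M'} [M|M t s M' [ht hp] _ IH]; first by constructor.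
  constructor => //; split => //.
  by move: ht; rewrite /restrict /= !inE negb_or; case/andP => /andP [-> ->] ->.
Qed.

Lemma lang_rr (N : net X) (K1 K2 : {set X}) (M : marking N) O w :
  lang (M : marking (restrict (restrict N K1) K2)) O w <->
  lang (M : marking (restrict N (K2 :|: K1))) O w.
Proof.
split; case=> s [M' [hf hw]]; exists s, M'; split => //; exact/fires_rr.
Qed.

Definition lmark (N1 N2 : net X) (Q : place (Defs.comp N1 N2) -> nat) : marking N1 :=
  fun p => Q (inl p).

Lemma proj (N1 N2 : net X) (K L : {set X}) (Q : marking (restrict (Defs.comp N1 N2) K)) s Q' :
  [disjoint trans N2 & L] -> fires Q s Q' ->
  exists s1 R, fires (lmark Q) s1 R /\
    [seq t <- s1 | t \in L] = [seq t <- s | t \in L].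
Proof.
move=> hdis; elim=> {Q s Q'} [Q|Q t s Q' [ht hp] _ [s1 [R [hf hw]]]].
  by exists [::], (lmark Q); split => //; constructor.
move: ht; rewrite /restrict /Defs.comp /= !inE => /andP [htK htN].
case htN1: (t \in trans N1).
- exists (t :: s1), R; split; last by rewrite /= hw.
  constructor.
    split => // p; have := hp (inl p); by rewrite /= htN1.
  have -> : fire (lmark Q) t = lmark (fire Q t).
    by apply: functional_extensionality => p; rewrite /lmark /fire /= htN1.
  exact: hf.
- have htN2 : t \in trans N2 by move: htN; rewrite htN1.
  have htL : t \notin L.
    by apply/negP => htL; move: hdis; rewrite disjoint_subset => /subsetP /(_ t htN2); rewrite inE htL.
  exists s1, R; split; last by rewrite /= (negbTE htL).
  have -> : lmark Q = lmark (fire Q t).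
    by apply: functional_extensionality => p; rewrite /lmark /fire /= htN1 addn0 subn0.
  exact: hf.
Qed.

Lemma lift (N1 N2 : net X) (K : {set X}) (M1 : marking N1) (M2 : marking N2) s M1' :
  fires M1 s M1' ->
  (forall t, t \in s -> t \notin K /\
     (t \in trans N2 -> forall p, pre N2 p t = 0 /\ post N2 p t = 0)) ->
  fires (comp_marking M1 M2 : marking (restrict (Defs.comp N1 N2) K)) s (comp_marking M1' M2).
Proof.
elim=> {M1 s M1'} [M1|M1 t s M1' [ht hp] _ IH] h.
  by constructor.
have [htK h2] := h t (mem_head _ _).
constructor.
  split; first by rewrite /restrict /Defs.comp /= !inE htK ht.
  case=> p /=; first by rewrite ht.
  by case: ifP => hh //; rewrite (proj1 (h2 hh p)).
have -> : fire (comp_marking M1 M2 : marking (restrict (Defs.comp N1 N2) K)) t =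
          comp_marking (fire M1 t) M2.
  apply: functional_extensionality; case=> p; rewrite /fire /=; first by rewrite ht.
  case: ifP => hh; last by rewrite addn0 subn0.
  by rewrite (proj1 (h2 hh p)) (proj2 (h2 hh p)) addn0 subn0.
by apply: IH => t' ht'; apply: h; rewrite inE ht' orbT.
Qed.

Lemma fires_sub (N : net X) (M : marking N) s M' :
  fires M s M' -> forall t, t \in s -> t \in trans N.
Proof.
elim=> {M s M'} // M t s M' [ht _] _ IH t'.
by rewrite inE => /orP [/eqP ->|/IH].
Qed.

Lemma core (N0 : net X) (M : marking N0) (L H : {set X}) :
  (forall t, t \in trans N0 -> t \notin H -> t \in L) -> [disjoint L & H] ->
  NDC M L H <-> lang_equiv (M : marking (restrict N0 H)) L M L.
Proof.
move=> hLH0 hLH; split.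
- move=> hndc.
  pose N' := Net (X:=X) void H (fun _ _ => 0) (fun _ _ => 0).
  pose M' := (fun _ => 0) : marking N'.
  have hd : [disjoint trans N' & L] by rewrite disjoint_sym.
  have := hndc N' M' hd => heq w; split.
  + case=> s [M1 [hf hw]]; have [hf' _] := fires_restrict hf.
    by exists s, M1.
  + case=> s [M1 [hf hw]]; apply/heq.
    exists s, (comp_marking M1 M'); split => //.
    by apply: lift => // t _; split; [rewrite setDv inE|case].
- move=> heq N' M' hd w; split.
  + case=> s [M1 [hf hw]]; have [hf' hK] := fires_restrict hf.
    exists s, (comp_marking M1 M'); split => //.
    apply: lift => // t hts; have htH := hK t hts.
    have htL := hLH0 t (fires_sub hf' hts) htH.
    split; first by rewrite inE negb_and htH orbT.
    move=> htN'; move: hd; rewrite disjoint_subset => /subsetP /(_ t htN').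
    by rewrite inE htL.
  + case=> s [Q [hf hw]].
    have [s1 [R [hf1 hw1]]] := proj hd hf.
    apply/heq; exists s1, R; split; first exact: hf1.
    by rewrite hw hw1.
Qed.

End Aux.

Theorem lemma3 (X : finType) (N : net X) (M0 : marking N) (L D H : {set X})
  (hpart : trans N = L :|: D :|: H)
  (hLD : [disjoint L & D]) (hLH : [disjoint L & H]) (hDH : [disjoint D & H]) :
  INI M0 L D H <->
  (lang_equiv (M0 : marking (restrict N D)) L
              (M0 : marking (restrict N (H :|: D))) L /\
   forall (M : marking N) (u : seq X) (d : X), d \in D ->
     fires M0 (rcons u d) M ->
     lang_equiv (M : marking (restrict N D)) L
                (M : marking (restrict N (H :|: D))) L).
Proof.
have hsub : forall t, t \in trans (restrict N D) -> t \notin H -> t \in L.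
  move=> t; rewrite /restrict /= inE hpart !inE => /andP [/negbTE -> ].
  by rewrite orbF => /orP [->|->].

have key : forall M : marking N,
    NDC (M : marking (restrict N D)) L H <->
    lang_equiv (M : marking (restrict N D)) L
               (M : marking (restrict N (H :|: D))) L.
  move=> M; have [c1 c2] := core (M : marking (restrict N D)) hsub hLH.
  split => h.
  + move=> w; have := c1 h w => e; split => hw.
    * by apply (proj1 (lang_rr D H M L w)); apply/e.
    * by apply/e; apply (proj2 (lang_rr D H M L w)).
  + apply: c2 => w; have := h w => e; split => hw.
    * by apply/e; apply (proj1 (lang_rr D H M L w)).
    * by apply (proj2 (lang_rr D H M L w)); apply/e.
rewrite /INI; split.
- case=> h0 h; split; first exact/key.
  by move=> M u d hd hf; apply/key; exact: h hf.
- case=> h0 h; split; first exact/key.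
  by move=> M u d hd hf; apply/key; exact: h hf.
Qed.
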